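(* Let $m\in\mathbb{N}$, $c=(c_1,\ldots,c_m)\in\mathbb{N}^m$ with all $c_j\ge 1$, and $\mathcal{X}=\{0,\ldots,c_1\}\times\cdots\times\{0,\ldots,c_m\}$. Let $\mathcal{V}_{\mathrm{mon}}$ be the set of all functions $\hat v:\mathcal{X}\to\mathbb{R}_{\ge 0}$ satisfying (M) monotonicity: for $a,b\in\mathcal{X}$ with $a_k\le b_k$ for all $k\in\{1,\ldots,m\}$, $\hat v(a)\le \hat v(b)$; and (N) normalization: $\hat v((0,\ldots,0))=0$. Then $\mathcal{V}_{\mathrm{mon}}$ is exactly the set of all multiset MVNNs $\mathcal{M}^{(W,b)}:\mathcal{X}\to\mathbb{R}_{\ge0}$ (over all choices of depth, layer widths, cutoffs $t^k>0$, entrywise non-negative weights $W$ and entrywise non-positive biases $b$). That is, every function satisfying (M) and (N) can be represented exactly as such a multiset MVNN, and every such multiset MVNN satisfies (M) and (N).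
   Context: A multiset MVNN (mMVNN) is a map $\mathcal{M}^{(W,b)}:\mathcal{X}\to\mathbb{R}_{\ge0}$ of the form $$\mathcal{M}^{(W,b)}(x)= W^{K}\varphi_{0,t^{K-1}}\Big(\cdots\varphi_{0,t^{1}}\big(W^{1}(Dx)+b^{1}\big)\cdots\Big),$$ where $K\in\mathbb{N}$ is the number of hidden layers; $\varphi_{0,t}(z)=\min(t,\max(0,z))$ (applied componentwise) is the bounded ReLU with cutoff $t>0$, with cutoffs $t^k>0$ for $k=1,\ldots,K-1$; $W^k\in\mathbb{R}^{d^k\times d^{k-1}}$ for $k=1,\ldots,K$ are matrices with all entries $\ge 0$, where $d^0=m$ and $d^K=1$; $b^k\in\mathbb{R}^{d^k}$ for $k=1,\ldots,K-1$ are vectors with all entries $\le 0$; and $D=\mathrm{diag}(1/c_1,\ldots,1/c_m)$ is a fixed (non-trainable) normalization matrix. *)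

(* Defs.v *)
From HB Require Import structures.
From mathcomp Require Import all_boot all_order all_algebra.
From mathcomp Require Import reals.
Set Implicit Arguments. Unset Strict Implicit. Unset Printing Implicit Defensive.
Import Order.TTheory GRing.Theory Num.Theory.
Local Open Scope ring_scope.

Definition brelu (R : realType) (t z : R) : R := Num.min t (Num.max 0 z).

(* A network with K-1 Hidden layers followed by Out is exactly the data
   (W^1,b^1,t^1, ..., W^{K-1},b^{K-1},t^{K-1}, W^K), K >= 1. *)
Inductive net (R : realType) : nat -> Type :=
| Out : forall n : nat, 'M[R]_(1, n) -> net R n
| Hidden : forall n p : nat, 'M[R]_(p, n) -> 'cV[R]_p -> R -> net R p -> net R n.

Fixpoint eval_net (R : realType) (n : nat) (N : net R n) : 'cV[R]_n -> R :=
  match N in net _ n return 'cV[R]_n -> R with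
  | Out _ W => fun z => (W *m z) ord0 ord0
  | Hidden _ _ W b t N' => fun z => eval_net N' (map_mx (brelu t) (W *m z + b))
  end.

Fixpoint valid_net (R : realType) (n : nat) (N : net R n) : Prop :=
  match N with
  | Out _ W => forall i j, 0 <= W i j
  | Hidden _ _ W b t N' =>
      (forall i j, 0 <= W i j) /\ (forall i j, b i j <= 0) /\ 0 < t /\ valid_net N'
  end.

Definition inX (m : nat) (c : 'I_m -> nat) (x : 'I_m -> nat) : Prop :=
  forall j, (x j <= c j)%N.

Definition normalize (R : realType) (m : nat) (c : 'I_m -> nat) (x : 'I_m -> nat)
  : 'cV[R]_m := \col_j ((x j)%:R / (c j)%:R).

Definition mMVNN (R : realType) (m : nat) (c : 'I_m -> nat) (N : net R m)
  (x : 'I_m -> nat) : R := eval_net N (normalize R c x).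

Definition Vmon (R : realType) (m : nat) (c : 'I_m -> nat)
  (v : ('I_m -> nat) -> R) : Prop :=
  (forall x, inX c x -> 0 <= v x) /\
  (forall a b, inX c a -> inX c b -> (forall k, (a k <= b k)%N) -> v a <= v b) /\
  v (fun _ => 0%N) = 0.

(* Main.v *)
Require Import Defs.
From HB Require Import structures.
From mathcomp Require Import all_boot all_order all_algebra.
From mathcomp Require Import reals.
From mathcomp Require Import zify ring lra.
Import Order.TTheory GRing.Theory Num.Theory.
Local Open Scope ring_scope.

Lemma brelu_nat (R : realType) (a b : nat) :
  brelu (1 : R) (a%:R - b%:R) = ((b < a)%N : nat)%:R.
Proof.
rewrite /brelu.
case: (ltnP b a) => h.
- have : (1 : R) <= a%:R - b%:R.
    have : ((b + 1)%N%:R : R) <= a%:R by rewrite ler_nat addn1.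
    rewrite natrD; lra.
  move=> H; rewrite maxElt ifT; last by apply: lt_le_trans H.
  rewrite minElt; case: ifP => // /negbT; rewrite -leNgt => h2.
  by apply/le_anti; rewrite h2 H.
- have : a%:R - b%:R <= (0 : R) by rewrite subr_le0 ler_nat.
  move=> H; rewrite maxElt ltNge H /= minElt ifF //.
  by apply/negbTE; rewrite -leNgt.
Qed.

Lemma sum_lt (M a : nat) : (\sum_(l < M) (l < a)%N : nat)%N = minn a M.
Proof.
elim: M => [|M IH]; first by rewrite big_ord0 minn0.
rewrite big_ord_recr /= IH.
case: (ltnP M a) => h /=; lia.
Qed.

Section Dir1.
Variable R : realType.

Lemma brelu_mono (t x y : R) : x <= y -> brelu t x <= brelu t y.
Proof. by move=> h; apply: le_min2 => //; apply: le_max2. Qed.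

Lemma brelu_npos (t x : R) : 0 < t -> x <= 0 -> brelu t x = 0.
Proof.
move=> ht hx; rewrite /brelu maxElt ltNge hx /= minElt ifF //.
by apply/negbTE; rewrite -leNgt ltW.
Qed.

Lemma eval_mono n (N : net R n) : valid_net N ->
  forall z1 z2 : 'cV[R]_n, (forall i, z1 i 0 <= z2 i 0) -> eval_net N z1 <= eval_net N z2.
Proof.
elim: N => [k W | k p W b t N IH] /=.
- move=> hW z1 z2 hz; rewrite !mxE; apply: ler_sum => i _.
  by apply: ler_wpM2l.
- move=> [hW [hb [ht hN]]] z1 z2 hz; apply: IH => // i.
  rewrite !mxE; apply: brelu_mono; rewrite lerD2r; apply: ler_sum => j _.
  by apply: ler_wpM2l.
Qed.

Lemma eval_zero n (N : net R n) : valid_net N -> eval_net N 0 = 0.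
Proof.
elim: N => [k W | k p W b t N IH] /=.
- by move=> _; rewrite mulmx0 mxE.
- move=> [hW [hb [ht hN]]]; rewrite mulmx0 add0r.
  have -> : map_mx (brelu t) b = 0.
    by apply/matrixP => i j; rewrite !mxE brelu_npos.
  exact: IH.
Qed.
End Dir1.

Section Tele.
Variable R : realType.
Definition b2r (b : bool) : R := (b : nat)%:R.

Lemma path_all (q : R) (s : seq R) : path <=%R q s -> all (fun y => q <= y) s.
Proof. by rewrite path_sortedE; [case/andP | exact: le_trans]. Qed.

Lemma tele (s : seq R) : forall p a : R, path <=%R p s -> (a = p \/ a \in s) -> p <= a ->
  \sum_(k < size s) (s`_k - nth 0 (p :: s) k) * b2r (s`_k <= a) = a - p.
Proof.
elim: s => [|q s IH] p a /=.
- by move=> _ [-> | //] _; rewrite big_ord0 subrr.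
- move=> /andP [hpq hs] ha hpa; rewrite big_ord_recl /=.
  have hall := @path_all _ _ hs.
  case: (boolP (q <= a)) => hqa.
  + rewrite (IH q a hs) //=; last first.
      case: ha => [ha | ]; first by left; apply/le_anti; rewrite hqa ha hpq.
      by rewrite in_cons => /orP [/eqP -> | h]; [left | right].
    rewrite /b2r /= mulr1; lra.
  + have hlt : a < q by rewrite ltNge.
    rewrite big1 ?addr0; last first.
      move=> i _; rewrite add0n.
      have hqi : q <= s`_i by apply: (allP hall); apply: mem_nth.
      have -> : (s`_i <= a) = false by apply/negbTE; rewrite -ltNge; exact: lt_le_trans hlt hqi.
      by rewrite /b2r mulr0.
    case: ha => [-> | ]; first by rewrite /b2r mulr0 subrr.
    rewrite in_cons => /orP [/eqP h | h]; first by move: hlt; rewrite h ltxx.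
    by move: (allP hall a h); rewrite leNgt hlt.
Qed.

Lemma tele_nonneg (s : seq R) : forall p, path <=%R p s ->
  forall k, (k < size s)%N -> nth 0 (p :: s) k <= s`_k.
Proof.
elim: s => [|q s IH] p //= /andP [hpq hs] [|k] //= hk.
exact: IH.
Qed.
End Tele.
Arguments b2r {R}.

Lemma b2rM (R : realType) (a b : bool) : b2r a * b2r b = b2r (a && b) :> R.
Proof. by case: a; case: b; rewrite /b2r /= ?mulr1 ?mulr0 ?mul0r. Qed.

Section Constr.
Variable R : realType.
Variable m : nat.
Variable c : 'I_m -> nat.
Hypothesis hc : forall j, (0 < c j)%N.
Variable v : ('I_m -> nat) -> R.
Hypothesis hv0 : forall x, inX c x -> 0 <= v x.
Hypothesis hvm : forall a b, inX c a -> inX c b -> (forall k, (a k <= b k)%N) -> v a <= v b.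
Hypothesis hvz : v (fun _ => 0%N) = 0.

Definition M := (\max_(j : 'I_m) c j)%N.
Lemma cM j : (c j <= M)%N. Proof. exact: leq_bigmax. Qed.

Definition T1 := ('I_m * 'I_M)%type.
Definition T2 := {ffun 'I_m -> 'I_M.+1}.
Definition idx1 (i : 'I_#|{: T1}|) : T1 := enum_val i.
Definition idx2 (i : 'I_#|{: T2}|) : T2 := enum_val i.
Definition clip (z : T2) : 'I_m -> nat := fun j => minn (z j) (c j).
Definition nsz (z : T2) : nat := (\sum_j (z j : nat))%N.
Definition vals : seq R := sort <=%R [seq y <- [seq v (clip z) | z <- enum T2] | 0 < y].

Definition W1 : 'M[R]_(#|{: T1}|, m) :=
  \matrix_(i, j) if (idx1 i).1 == j then (c j)%:R else 0.
Definition b1 : 'cV[R]_(#|{: T1}|) := \col_i - ((idx1 i).2 : nat)%:R.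
Definition W2 : 'M[R]_(#|{: T2}|, #|{: T1}|) :=
  \matrix_(i, k) b2r ((idx1 k).2 < idx2 i (idx1 k).1)%N.
Definition b2 : 'cV[R]_(#|{: T2}|) := \col_i - ((nsz (idx2 i)).-1)%:R.
Definition W3 : 'M[R]_(size vals, #|{: T2}|) :=
  \matrix_(k, i) b2r ((0 < nsz (idx2 i))%N && (vals`_k <= v (clip (idx2 i)))).
Definition W4 : 'M[R]_(1, size vals) := \matrix_(_, k) (vals`_k - nth 0 (0 :: vals) k).
Definition theNet : net R m :=
  Hidden W1 b1 1 (Hidden W2 b2 1 (Hidden W3 0 1 (Out W4))).

Lemma b2r_ge0 b : 0 <= b2r b :> R. Proof. by case: b; rewrite /b2r. Qed.

Lemma vals_path : path <=%R 0 vals.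
Proof.
rewrite path_sortedE; last exact: le_trans.
rewrite sort_sorted ?andbT; last exact: le_total.
rewrite all_sort; apply/allP => y; rewrite mem_filter => /andP [h _]; exact: ltW.
Qed.

Lemma theNet_valid : valid_net theNet.
Proof.
rewrite /theNet /=; split; [|split; [|split; [|split; [|split; [|split; [|split; [|split; [|split]]]]]]]].
- by move=> i j; rewrite mxE; case: eqP => _ //; rewrite ler0n.
- by move=> i j; rewrite mxE oppr_le0 ler0n.
- exact: ltr01.
- by move=> i j; rewrite mxE b2r_ge0.
- by move=> i j; rewrite mxE oppr_le0 ler0n.
- exact: ltr01.
- by move=> i j; rewrite mxE b2r_ge0.
- by move=> i j; rewrite mxE.
- exact: ltr01.
- move=> i j; rewrite mxE subr_ge0; apply: tele_nonneg => //; exact: vals_path.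
Qed.

Lemma L1 (x : 'I_m -> nat) :
  map_mx (brelu 1) (W1 *m normalize R c x + b1) =
  \col_i b2r ((idx1 i).2 < x (idx1 i).1)%N.
Proof.
apply/matrixP => i j; rewrite !mxE.
under eq_bigr => k _ do rewrite !mxE.
rewrite (bigD1 (idx1 i).1) //= eqxx big1 ?addr0; last first.
  by move=> k /negbTE hk; rewrite eq_sym hk mul0r.
have hcj : (c (idx1 i).1)%:R != 0 :> R by rewrite pnatr_eq0 -lt0n.
rewrite mulrC divfK // brelu_nat //.
Qed.

Lemma sum1 (F : T1 -> nat) :
  (\sum_(k < #|{: T1}|) F (idx1 k) = \sum_(p : T1) F p)%N.
Proof. by rewrite (big_enum_val F). Qed.

Lemma sum2 (F : T2 -> nat) :
  (\sum_(k < #|{: T2}|) F (idx2 k) = \sum_(p : T2) F p)%N.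
Proof. by rewrite (big_enum_val F). Qed.

Definition S (z : T2) (x : 'I_m -> nat) := (\sum_j minn (z j) (x j))%N.

Lemma L2 (x : 'I_m -> nat) : inX c x ->
  map_mx (brelu 1) (W2 *m (\col_i b2r ((idx1 i).2 < x (idx1 i).1)%N) + b2) =
  \col_i b2r ((nsz (idx2 i)).-1 < S (idx2 i) x)%N.
Proof.
move=> hx; apply/matrixP => i j; rewrite !mxE.
under eq_bigr => k _ do rewrite !mxE b2rM /b2r.
rewrite -natr_sum (sum1 (fun p => ((p.2 < idx2 i p.1)%N && (p.2 < x p.1)%N : nat))) -(pair_big predT predT (fun (j : 'I_m) (l : 'I_M) => ((l < idx2 i j)%N && (l < x j)%N : nat))) /=.
have -> : (\sum_(j0 < m) \sum_(l < M) ((l < idx2 i j0)%N && (l < x j0)%N : nat))%N = S (idx2 i) x.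
  apply: eq_bigr => j0 _.
  under eq_bigr => l _ do rewrite -leq_min.
  rewrite sum_lt; apply/minn_idPl.
  have := ltn_ord (idx2 i j0); have := cM j0; lia.
by rewrite brelu_nat.
Qed.

Lemma v_ext a b : inX c a -> (forall j, a j = b j) -> v a = v b.
Proof.
move=> ha hab; have hb : inX c b by move=> j; rewrite -hab.
by apply/le_anti; rewrite !hvm // => k; rewrite hab.
Qed.

Lemma clipX z : inX c (clip z).
Proof. by move=> j; rewrite /clip geq_minr. Qed.

Lemma ge_sum_min (z x : 'I_m -> nat) :
  (\sum_j z j <= \sum_j minn (z j) (x j))%N -> forall j, (z j <= x j)%N.
Proof.
move=> h j; rewrite leqNgt; apply/negP => hlt; move: h.
rewrite (bigD1 j) //= [X in (_ <= X)%N](bigD1 j) //=.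
set A := (\sum_(i < m | i != j) minn (z i) (x i))%N.
set B := (\sum_(i < m | i != j) z i)%N.
have : (A <= B)%N by apply: leq_sum => i _; rewrite geq_minl.
lia.
Qed.

Lemma pl n s : (0 < n)%N -> (n.-1 < s)%N -> (n <= s)%N.
Proof. by case: n. Qed.

Lemma vals_pos k : (k < size vals)%N -> 0 < vals`_k.
Proof.
move=> hk; have : vals`_k \in vals by apply: mem_nth.
by rewrite mem_sort mem_filter => /andP [].
Qed.

Lemma L3 (x : 'I_m -> nat) : inX c x ->
  map_mx (brelu 1) (W3 *m (\col_i b2r ((nsz (idx2 i)).-1 < S (idx2 i) x)%N) + 0) =
  \col_k b2r (vals`_k <= v x).
Proof.
move=> hx; apply/matrixP => k j; rewrite !mxE addr0.
under eq_bigr => i _ do rewrite !mxE b2rM /b2r.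
rewrite -natr_sum (sum2 (fun z => (((0 < nsz z)%N && (vals`_k <= v (clip z))) &&
   ((nsz z).-1 < S z x)%N : nat))).
rewrite -[X in brelu _ X]subr0 -[X in brelu _ (_ - X)](mulr0n (1 : R)) brelu_nat.
congr b2r; apply/idP/idP.
- move=> hpos.
  case: (boolP [exists z : T2, ((0 < nsz z)%N && (vals`_k <= v (clip z))) &&
      ((nsz z).-1 < S z x)%N]).
  + move=> /existsP [z /andP [/andP [hnz hle] hS]].
    apply: (le_trans hle); apply: hvm => //; first exact: clipX.
    have hzx : forall j, (z j <= x j)%N.
      apply: ge_sum_min; exact: pl hnz hS.
    by move=> j0; rewrite /clip geq_min hzx.
  + move=> /existsPn hn; move: hpos; rewrite big1 // => z _.
    by move: (hn z) => /negbTE ->.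
- move=> hle.
  pose z0 : T2 := [ffun j => inord (x j)].
  have hz0 : forall j, (z0 j : nat) = x j.
    move=> j0; rewrite ffunE inordK //; have := hx j0; have := cM j0; lia.
  rewrite (bigD1 z0) //=.
  have hk : (k < size vals)%N by [].
  have hvx : 0 < v x by apply: lt_le_trans hle; apply: vals_pos.
  have hnz : (0 < nsz z0)%N.
    rewrite lt0n; apply/negP => /eqP h0.
    have : v x <= v (fun _ => 0%N).
      apply: hvm => // j0; move: h0; rewrite /nsz => /eqP; rewrite sum_nat_eq0.
      by move=> /forallP /(_ j0) /=; rewrite hz0 => /eqP ->.
    by rewrite hvz leNgt hvx.
  have hc0 : v (clip z0) = v x.
    apply: v_ext; first exact: clipX.
    by move=> j0; rewrite /clip hz0; apply/minn_idPl; apply: hx.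
  have hS : S z0 x = nsz z0.
    by rewrite /S /nsz; apply: eq_bigr => j0 _; rewrite hz0 minnn.
  rewrite hnz hc0 hle hS /=; move: hnz; case: (nsz z0) => //= n _.
  by rewrite ltnS leqnn.
Qed.

Lemma vx_in x : inX c x -> v x = 0 \/ v x \in vals.
Proof.
move=> hx; have := hv0 x hx; rewrite le_eqVlt => /orP [/eqP <-| hpos]; first by left.
right; rewrite mem_sort mem_filter hpos /=.
pose z0 : T2 := [ffun j => inord (x j)].
have hz0 : forall j, (z0 j : nat) = x j.
  move=> j0; rewrite ffunE inordK //; have := hx j0; have := cM j0; lia.
have -> : v x = v (clip z0).
  apply: v_ext => // j0; rewrite /clip hz0; apply/esym/minn_idPl; apply: hx.
by apply: map_f; rewrite mem_enum.
Qed.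

Lemma main_eq x : inX c x -> v x = mMVNN c theNet x.
Proof.
move=> hx; rewrite /mMVNN /theNet /= L1 L2 // L3 // mxE.
under eq_bigr => k _ do rewrite !mxE.
by rewrite (@tele R vals 0 (v x) vals_path (vx_in x hx) (hv0 x hx)) subr0.
Qed.
End Constr.

Theorem theorem1 (R : realType) (m : nat) (c : 'I_m -> nat)
  (hc : forall j, (0 < c j)%N) (v : ('I_m -> nat) -> R) :
  Vmon c v <->
  exists N : net R m, valid_net N /\ (forall x, inX c x -> v x = mMVNN c N x).
Proof.
split.
- move=> [hv0 [hvm hvz]].
  exists (theNet R m c v); split; first exact: (@theNet_valid R m c v).
  exact: (@main_eq R m c hc v hv0 hvm hvz).
- move=> [N [hN hv]].
  have hnorm0 : normalize R c (fun _ => 0%N) = 0.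
    by apply/matrixP => i j; rewrite !mxE mul0r.
  have hX0 : inX c (fun _ => 0%N) by [].
  split; [|split].
  + move=> x hx; rewrite hv // /mMVNN -(@eval_zero R m N hN); apply: eval_mono => // i.
    by rewrite !mxE divr_ge0.
  + move=> a b ha hb hab; rewrite !hv //; apply: eval_mono => // i.
    rewrite !mxE; apply: ler_wpM2r; first by rewrite invr_ge0.
    by rewrite ler_nat.
  + by rewrite hv // /mMVNN hnorm0 (@eval_zero R m N hN).
Qed.
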